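(* Let $H$ be a graph such that $L(H)$ satisfies the Abu-Khzam–Langston property, i.e. for every positive integer $t$, $\chi(L(H))\geq t$ implies that $L(H)$ has a $K_t$-immersion. Then for every integer $m\geq 2$, $L(mH)$ also satisfies this property: for every positive integer $t$, $\chi(L(mH))\geq t$ implies that $L(mH)$ has a $K_t$-immersion.
   Context: Graphs are finite and may have parallel edges but no loops. $\chi$ denotes the chromatic number. The line graph $L(H)$ of a graph $H$ is the simple graph whose vertex set is $E(H)$, in which two distinct edges of $H$ are adjacent iff they share at least one endpoint. For $m\geq 2$, $mH$ denotes the graph obtained from $H$ by replacing each edge $e$ by $m$ parallel copies of $e$. A graph $G$ has a $K_t$-immersion if there is an injective map $\phi$ from the vertex set of $K_t$ to $V(G)$ and, for each pair $u\neq v$ of vertices of $K_t$, a path in $G$ joining $\phi(u)$ and $\phi(v)$, such that these paths are pairwise edge-disjoint. *)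

(* Defs.v *)
From mathcomp Require Import all_boot.
Set Implicit Arguments. Unset Strict Implicit. Unset Printing Implicit Defensive.

(* A (finite, loopless) multigraph H is given by finite types V (vertices) and
   E (edges) and endpoint maps src tgt : E -> V with src e != tgt e.
   Parallel edges are allowed (distinct edges may have the same endpoints). *)

Definition line_graph (V E : finType) (src tgt : E -> V) : rel E :=
  fun e f => (e != f) &&
    [|| src e == src f, src e == tgt f, tgt e == src f | tgt e == tgt f].

(* mH: each edge e replaced by m parallel copies (e, i), i < m. *)
Definition mult_src (V E : finType) (m : nat) (src : E -> V) : E * 'I_m -> V :=
  fun x => src x.1.
Arguments mult_src {V E} m src _.

(* Simple graphs: symmetric irreflexive relations on a finType. *)
Definition colorable (T : finType) (G : rel T) (k : nat) : bool :=
  [exists c : {ffun T -> 'I_k}, [forall x, forall y, G x y ==> (c x != c y)]].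

Lemma colorable_card (T : finType) (G : rel T) :
  (forall x, ~~ G x x) -> exists k, colorable G k.
Proof.
move=> irr; exists #|T|; apply/existsP; exists [ffun x => enum_rank x].
apply/forallP => x; apply/forallP => y; apply/implyP => Gxy.
rewrite !ffunE; apply/negP => /eqP /enum_rank_inj exy.
by move: Gxy; rewrite exy (negbTE (irr y)).
Qed.

(* Chromatic number: least k admitting a proper k-colouring
   (the relation is assumed irreflexive; otherwise defined as 0). *)
Definition chi (T : finType) (G : rel T) : nat :=
  match boolP [forall x, ~~ G x x] with
  | AltTrue h => ex_minn (colorable_card (fun x => (forallP h) x))
  | AltFalse _ => 0
  end.

Definition uses_edge (T : eqType) (x : T) (p : seq T) (a b : T) : bool :=
  ((a, b) \in zip (x :: p) p) || ((b, a) \in zip (x :: p) p).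

Definition has_K_immersion (T : finType) (G : rel T) (t : nat) : Prop :=
  exists (phi : 'I_t -> T) (P : 'I_t -> 'I_t -> seq T),
    injective phi /\
    (forall u v : 'I_t, u < v ->
       [/\ path G (phi u) (P u v), last (phi u) (P u v) = phi v
         & uniq (phi u :: P u v)]) /\
    (forall u v u' v' : 'I_t, u < v -> u' < v' -> (u, v) != (u', v') ->
       forall a b, uses_edge (phi u) (P u v) a b ->
                   ~~ uses_edge (phi u') (P u' v') a b).

Definition AKL_property (T : finType) (G : rel T) : Prop :=
  forall t : nat, 0 < t -> t <= chi G -> has_K_immersion G t.

(* Main.v *)
Require Import Defs.
From mathcomp Require Import all_boot zify.
Set Implicit Arguments. Unset Strict Implicit. Unset Printing Implicit Defensive.

Lemma chi_spec (T : finType) (G : rel T) : (forall x, ~~ G x x) ->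
  colorable G (chi G) /\ forall k, colorable G k -> chi G <= k.
Proof.
move=> irr; rewrite /chi; destruct (boolP [forall x, ~~ G x x]) as [h|h]; last first.
  by exfalso; move/negP: h; apply; apply/forallP.
by case: ex_minnP => n Hn Hmin; split.
Qed.

Section Fseq.
Variable T : eqType.
Fixpoint fseq (q : nat -> T) k := if k is k'.+1 then q 1 :: fseq (fun l => q l.+1) k' else [::].

Lemma fseq_nth (x d : T) p : p = fseq (fun l => nth d (x :: p) l) (size p).
Proof. by elim: p x => [|y p IH] x //=; congr cons; apply: IH. Qed.

Lemma fseq_path (r : rel T) k q : path r (q 0) (fseq q k) <-> forall l, l < k -> r (q l) (q l.+1).
Proof.
elim: k q => [|k IH] q /=; first by split.
have /= IHq := IH (fun l => q l.+1); split.
  by case/andP=> h1 /IHq h2 [|l] //= /h2.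
by move=> h; rewrite h //=; apply/IHq => l hl; apply: h.
Qed.

Lemma fseq_last k q x : last x (fseq q k) = if k is 0 then x else q k.
Proof. by elim: k q x => [|k IH] q x //=; rewrite IH; case: k {IH}. Qed.

Lemma fseq_zip k q a b : (a, b) \in zip (q 0 :: fseq q k) (fseq q k) <->
  exists2 l, l < k & a = q l /\ b = q l.+1.
Proof.
elim: k q a b => [|k IH] q a b /=; first by split=> // -[].
have /= IHq := IH (fun l => q l.+1) a b.
rewrite in_cons; split.
  case/orP=> [/eqP [-> ->]|H]; first by exists 0.
  by have [l hl [-> ->]] := proj1 IHq H; exists l.+1.
case=> [[|l]] hl [ea eb]; first by rewrite ea eb eqxx.
by apply/orP; right; apply/(proj2 IHq); exists l.
Qed.

Lemma fseq_uses k q a b : uses_edge (q 0) (fseq q k) a b <->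
  exists2 l, l < k & (a = q l /\ b = q l.+1) \/ (b = q l /\ a = q l.+1).
Proof.
rewrite /uses_edge; split.
  case/orP=> [/fseq_zip [l hl h]|/fseq_zip [l hl h]]; exists l => //; tauto.
case=> l hl [h|h]; apply/orP; [left|right]; apply/fseq_zip; by exists l.
Qed.

Lemma fseq_mem k q x : x \in q 0 :: fseq q k <-> exists2 l, l <= k & x = q l.
Proof.
elim: k q x => [|k IH] q x /=.
  rewrite in_cons in_nil orbF; split; first by move/eqP->; exists 0.
  by case=> [[|l]] // _ ->.
have /= IHq := IH (fun l => q l.+1) x.
rewrite in_cons; split.
  case/orP=> [/eqP ->|H]; first by exists 0.
  by have [l hl ->] := proj1 IHq H; exists l.+1.
case=> [[|l]] hl ex; first by rewrite ex eqxx.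
by apply/orP; right; apply/(proj2 IHq); exists l.
Qed.

Lemma fseq_uniq k q : uniq (q 0 :: fseq q k) <->
  forall l l', l <= k -> l' <= k -> q l = q l' -> l = l'.
Proof.
elim: k q => [|k IH] q.
  by split=> // _ [|l] [|l'].
have /= IHq := IH (fun l => q l.+1).
change (uniq (q 0 :: (q 1 :: fseq (fun l => q l.+1) k))) with
  ((q 0 \notin q 1 :: fseq (fun l => q l.+1) k) && uniq (q 1 :: fseq (fun l => q l.+1) k)).
split.
  case/andP=> hn /(proj1 IHq) hi [|l] [|l'] hl hl' //= E.
  - by exfalso; move/negP: hn; apply; apply/(fseq_mem k (fun l => q l.+1)); exists l'.
  - by exfalso; move/negP: hn; apply; apply/(fseq_mem k (fun l => q l.+1)); exists l; rewrite // E.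
  - by congr S; apply: hi.
move=> h; apply/andP; split.
  apply/negP => /(fseq_mem k (fun l => q l.+1)) [l hl E].
  by have := h 0 l.+1 erefl hl E.
apply/(proj2 IHq).
by move=> l l' hl hl' E; have [] := h l.+1 l'.+1 hl hl' E.
Qed.
End Fseq.
Definition fnat k i j l := if l == 0 then i else if l == k then j else if odd l then i + j else i.

Lemma fnat_inj m k i j i' j' l : i < m -> j < m -> i' < m -> j' < m -> l < k ->
 fnat k i j l %% m = fnat k i' j' l %% m -> fnat k i j l.+1 %% m = fnat k i' j' l.+1 %% m ->
 i = i' /\ j = j'.
Proof.
move=> hi hj hi' hj' hl.
have sm x y : x < m -> y < m -> x %% m = y %% m -> x = y.
  by move=> hx hy; rewrite !modn_small.
have A1 : i = i' -> (i + j) %% m = (i' + j') %% m -> i = i' /\ j = j'.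
  move=> e; rewrite -e => /eqP; rewrite eqn_modDl => /eqP /sm; auto.
have A2 : j = j' -> (i + j) %% m = (i' + j') %% m -> i = i' /\ j = j'.
  move=> e; rewrite -e => /eqP; rewrite eqn_modDr => /eqP /sm; auto.
rewrite /fnat; case: l hl => [|l] hl /=.
  move=> /sm e; have {}e := e hi hi'.
  case: eqP => _; first by move/sm; auto.
  by apply: A1.
have -> : (l.+1 == k) = false by apply/eqP; lia.
case: eqP => _.
  move=> h /sm e; have {}e := e hj hj'; case: (odd l) h => /= h.
    by move/sm: h; auto.
  exact: A2 e h.
case: (odd l) => /=.
  by move=> /sm e; have {}e := e hi hi'; move=> h; apply: A1.
by move=> h /sm e; have {}e := e hi hi'; apply: A1.
Qed.

Section Main.
Variables (V E : finType) (src tgt : E -> V) (m : nat).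
Let G := line_graph src tgt.
Let G' := line_graph (mult_src m src) (mult_src m tgt).

Lemma adj_same (x y : E * 'I_m) : x.1 = y.1 -> x != y -> G' x y.
Proof. by rewrite /G' /line_graph /mult_src => -> ->; rewrite eqxx. Qed.

Lemma adj_lift (x y : E * 'I_m) : G x.1 y.1 -> G' x y.
Proof.
rewrite /G /G' /line_graph /mult_src => /andP [ne h]; rewrite h andbT.
by apply: contra ne => /eqP ->.
Qed.

Lemma uses1 (T : eqType) (x y a b : T) : uses_edge x [:: y] a b ->
  (a = x /\ b = y) \/ (b = x /\ a = y).
Proof.
rewrite /uses_edge /= !in_cons !in_nil !orbF => /orP [/eqP [-> ->]|/eqP [-> ->]]; auto.
Qed.

Lemma fseq_last' (T : eqType) k (q : nat -> T) x : 0 < k -> last x (fseq q k) = q k.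
Proof. by rewrite fseq_last; case: k. Qed.
End Main.

Theorem corollary1p3 (V E : finType) (src tgt : E -> V)
    (loopless : forall e, src e != tgt e) :
  AKL_property (line_graph src tgt) ->
  forall m : nat, 2 <= m ->
    AKL_property (line_graph (mult_src m src) (mult_src m tgt)).
Proof.
move=> AKL m hm t t0 tchi.
set G := line_graph src tgt.
set G' := line_graph (mult_src m src) (mult_src m tgt).
have m0 : 0 < m by lia.
have irrG : forall x, ~~ G x x by move=> x; rewrite /G /line_graph eqxx.
have irrG' : forall x, ~~ G' x x by move=> x; rewrite /G' /line_graph eqxx.
have [colG _] := chi_spec irrG.
have [_ minG'] := chi_spec irrG'.
set c := chi G in colG.
have colG' : colorable G' (c * m).
  case/existsP: colG => cf /forallP Hc.
  have hb : forall x : E * 'I_m, cf x.1 * m + x.2 < c * m.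
    by move=> x; have := ltn_ord (cf x.1); have := ltn_ord x.2; nia.
  apply/existsP; exists [ffun x => Ordinal (hb x)].
  apply/forallP => -[e a]; apply/forallP => -[f b]; apply/implyP => Hef.
  rewrite !ffunE; apply/negP => /eqP [] E1.
  have E2 : cf e = cf f.
    apply: val_inj; have := congr1 (divn^~ m) E1.
    by rewrite /= !divnMDl // !divn_small // !addn0.
  have E3 : a = b.
    apply: val_inj; have := congr1 (modn^~ m) E1.
    by rewrite /= !modnMDl !modn_small.
  case: (eqVneq e f) => [ef|nef].
    by move: Hef; rewrite ef E3 /G' /line_graph eqxx.
  have Gef : G e f.
    by move: Hef; rewrite /G' /G /line_graph /mult_src /= nef => /andP [_ ->].
  by move: (Hc e) => /forallP /(_ f) /implyP /(_ Gef); rewrite E2 eqxx.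
have tcm : t <= c * m by apply: leq_trans tchi (minG' _ colG').
set s' := t.-1 %/ m.
have sc : s'.+1 <= c by rewrite ltn_divLR //; lia.
have [phi [P [Hinj [Hpath Hdisj]]]] := AKL s'.+1 erefl sc.
have bP : forall u : 'I_t, u %/ m < s'.+1.
  by move=> u; rewrite ltnS; apply: leq_div2r; have := ltn_ord u; lia.
pose bu (u : 'I_t) : 'I_s'.+1 := Ordinal (bP u).
pose cu (u : 'I_t) : 'I_m := Ordinal (ltn_pmod u m0).
pose ph' u := (phi (bu u), cu u).
have hdm : forall u v : 'I_t, bu u = bu v -> cu u = cu v -> u = v.
  move=> u v /(congr1 val) /= e1 /(congr1 val) /= e2.
  by apply: val_inj; rewrite /= (divn_eq u m) (divn_eq v m) e1 e2.
have ph'inj : injective ph'.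
  by move=> u v e; apply: hdm; [apply: Hinj; exact: (congr1 fst e)|exact: (congr1 snd e)].
pose fc k (i j : nat) l : 'I_m := Ordinal (ltn_pmod (fnat k i j l) m0).
pose X (u v : 'I_t) l := nth (phi (bu u)) (phi (bu u) :: P (bu u) (bu v)) l.
pose K (u v : 'I_t) := size (P (bu u) (bu v)).
pose q (u v : 'I_t) l := (X u v l, fc (K u v) (cu u) (cu v) l).
pose P' u v := if bu u == bu v then [:: ph' v] else fseq (q u v) (K u v).
have HP : forall u v, P (bu u) (bu v) = fseq (X u v) (K u v).
  by move=> u v; apply: fseq_nth.
have hq0 : forall u v, q u v 0 = ph' u.
  by move=> u v; congr pair; apply: val_inj; rewrite /= modn_mod.
have cross : forall u v : 'I_t, bu u < bu v ->
  [/\ 0 < K u v, (forall l, l < K u v -> G (X u v l) (X u v l.+1)),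
      X u v (K u v) = phi (bu v) &
      forall l l', l <= K u v -> l' <= K u v -> X u v l = X u v l' -> l = l'].
  move=> u v lt; have [hp hl hu] := Hpath _ _ lt.
  rewrite HP in hp hl hu.
  have hp' := proj1 (fseq_path G (K u v) (X u v)) hp.
  have hu' := proj1 (fseq_uniq (K u v) (X u v)) hu.
  move: hl; rewrite fseq_last.
  case Ek: (K u v) => [|k] hl.
    by move/Hinj: hl => e; rewrite e ltnn in lt.
  by split=> //; rewrite -Ek.
have hqK : forall u v : 'I_t, bu u < bu v -> q u v (K u v) = ph' v.
  move=> u v lt; have [kp _ xk _] := cross u v lt.
  congr pair => //; apply: val_inj; rewrite /= /fnat eqxx.
  by rewrite ifN ?modn_mod // -lt0n.
have bule : forall u v : 'I_t, u < v -> bu u <= bu v.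
  by move=> u v lt; apply: leq_div2r; apply: ltnW.
exists ph', P'; split; first exact: ph'inj.
split.
  move=> u v lt; rewrite /P'; case: eqP => hb.
    split=> //=; last first.
      rewrite in_cons in_nil orbF andbT; apply/eqP => /ph'inj e.
      by rewrite e ltnn in lt.
    rewrite andbT; apply: adj_same; first by rewrite /= hb.
    by apply/eqP => /ph'inj e; rewrite e ltnn in lt.
  have ltb : bu u < bu v by rewrite ltn_neqAle bule // andbT; apply/eqP => /val_inj.
  have [kp adjX lastX injX] := cross u v ltb.
  split.
  - rewrite -(hq0 u v); apply/(proj2 (fseq_path _ _ _)) => l hl; apply: adj_lift; exact: adjX.
  - by rewrite fseq_last' // hqK.
  - rewrite -(hq0 u v); apply/(proj2 (fseq_uniq _ _)) => l l' hl hl' e.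
    by apply: injX => //; exact: (congr1 fst e).
move=> u v u' v' lt lt' neq a b H1; apply/negP => H2.
have nq : ~ (u = u' /\ v = v') by case=> e1 e2; rewrite e1 e2 eqxx in neq.
have ltb : forall u v : 'I_t, u < v -> bu u != bu v -> bu u < bu v.
  by move=> x y lxy hb; rewrite ltn_neqAle hb bule.
move: H1 H2; rewrite /P'; case: eqP => hb; case: eqP => hb' H1 H2.
- case: (uses1 H1) => -[ea eb]; case: (uses1 H2) => -[ea' eb'].
  + by apply: nq; split; apply: ph'inj; congruence.
  + have e1 : u = v' by apply: ph'inj; congruence.
    have e2 : v = u' by apply: ph'inj; congruence.
    by rewrite e1 e2 in lt; move: (ltn_trans lt lt'); rewrite ltnn.
  + have e1 : u = v' by apply: ph'inj; congruence.
    have e2 : v = u' by apply: ph'inj; congruence.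
    by rewrite e1 e2 in lt; move: (ltn_trans lt lt'); rewrite ltnn.
  + by apply: nq; split; apply: ph'inj; congruence.
- have hab : a.1 = b.1 by case: (uses1 H1) => -[-> ->] /=; rewrite hb.
  have [kp adjX lastX injX] := cross u' v' (ltb _ _ lt' (introN eqP hb')).
  move: H2; rewrite -(hq0 u' v') => /(fseq_uses _ _ _ _) [l hl [[ea eb]|[eb ea]]].
  + have := injX l l.+1 (ltnW hl) hl; rewrite -[X u' v' l]/(q u' v' l).1 -ea.
    by rewrite hab eb => /(_ erefl) /n_Sn.
  + have := injX l l.+1 (ltnW hl) hl; rewrite -[X u' v' l]/(q u' v' l).1 -eb.
    by rewrite -hab ea => /(_ erefl) /n_Sn.
- have hab : a.1 = b.1 by case: (uses1 H2) => -[-> ->] /=; rewrite hb'.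
  have [kp adjX lastX injX] := cross u v (ltb _ _ lt (introN eqP hb)).
  move: H1; rewrite -(hq0 u v) => /(fseq_uses _ _ _ _) [l hl [[ea eb]|[eb ea]]].
  + have := injX l l.+1 (ltnW hl) hl; rewrite -[X u v l]/(q u v l).1 -ea.
    by rewrite hab eb => /(_ erefl) /n_Sn.
  + have := injX l l.+1 (ltnW hl) hl; rewrite -[X u v l]/(q u v l).1 -eb.
    by rewrite -hab ea => /(_ erefl) /n_Sn.
have lb := ltb _ _ lt (introN eqP hb).
have lb' := ltb _ _ lt' (introN eqP hb').
have [kp adjX lastX injX] := cross u v lb.
move: H1; rewrite -(hq0 u v) => /(fseq_uses _ _ _ _) [l hl o1].
move: H2; rewrite -(hq0 u' v') => /(fseq_uses _ _ _ _) [l' hl' o2].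
case: (eqVneq (bu u, bu v) (bu u', bu v')) => [E12|nb]; last first.
  have U1 : uses_edge (phi (bu u)) (P (bu u) (bu v)) a.1 b.1.
    rewrite HP; apply: (proj2 (fseq_uses (K u v) (X u v) a.1 b.1)); exists l => //.
    by case: o1 => -[-> ->]; [left|right].
  have U2 : uses_edge (phi (bu u')) (P (bu u') (bu v')) a.1 b.1.
    rewrite HP; apply: (proj2 (fseq_uses (K u' v') (X u' v') a.1 b.1)); exists l' => //.
    by case: o2 => -[-> ->]; [left|right].
  by move: (Hdisj _ _ _ _ lb lb' nb _ _ U1); rewrite U2.
have eu : bu u = bu u' := congr1 fst E12.
have ev : bu v = bu v' := congr1 snd E12.
have eX : X u' v' = X u v by rewrite /X eu ev.
have eK : K u' v' = K u v by rewrite /K eu ev.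
have key : (q u v l = q u' v' l' /\ q u v l.+1 = q u' v' l'.+1) \/
           (q u v l = q u' v' l'.+1 /\ q u v l.+1 = q u' v' l').
  by case: o1 => -[e1 e2]; case: o2 => -[e3 e4]; [left|right|right|left]; split; congruence.
rewrite eK in hl'.
case: key => [[e1 e2]|[e1 e2]].
  have el : l = l'.
    apply: injX; [exact: ltnW|exact: ltnW|].
    by have := congr1 fst e1; rewrite /= eX.
  subst l'.
  have f1 := congr1 (fun x => val x.2) e1.
  have f2 := congr1 (fun x => val x.2) e2.
  move: f1 f2; rewrite /= eK => f1 f2.
  have [c1 c2] := fnat_inj (ltn_ord (cu u)) (ltn_ord (cu v)) (ltn_ord (cu u'))
     (ltn_ord (cu v')) hl f1 f2.
  apply: nq; split; apply: hdm => //; exact: val_inj.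
have i1 : l = l'.+1.
  apply: injX => //; first exact: ltnW.
  by have := congr1 fst e1; rewrite /= eX.
have i2 : l.+1 = l'.
  apply: injX => //; first exact: ltnW.
  by have := congr1 fst e2; rewrite /= eX.
lia.
Qed.
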